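(* Let $n\ge4$, $x_1,\dots,x_{n-1}>0$, $\gamma,\delta>0$ with $\gamma\ne1\ne\delta$, $x_0=1$, and let $\mathbf{P}$ be the $n\times n$ matrix with entries $p_{ij}=x_{j-1}/x_{i-1}$ except $p_{12}=\delta x_1$, $p_{21}=1/(\delta x_1)$, $p_{13}=\gamma x_2$, $p_{31}=1/(\gamma x_2)$. Let $\mathbf{w}^{EM}=(w_1^{EM},\dots,w_n^{EM})^T$ be the principal right eigenvector of $\mathbf{P}$. If $\delta>1$ and $\delta\ge\gamma$, then $w_1^{EM}/w_2^{EM}<\delta x_1$.
   Context: The principal right eigenvector is the positive (Perron) eigenvector belonging to the largest eigenvalue; the ratios of its entries do not depend on its scaling. *)

(* Defs.v *)
From HB Require Import structures.
From mathcomp Require Import all_boot all_order all_algebra.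
From mathcomp Require Import reals.
Set Implicit Arguments. Unset Strict Implicit. Unset Printing Implicit Defensive.
Import Order.TTheory GRing.Theory Num.Theory.
Local Open Scope ring_scope.

(* Indices are 0-based: row/column i (0-based) corresponds to index i+1 of the
   paper, and x k is the paper's x_k (with x 0 = 1 assumed in the theorem). *)

Definition Pentry (R : realType) (x : nat -> R) (gamma delta : R) (i j : nat) : R :=
  if (i == 0%N) && (j == 1%N) then delta * x 1%N
  else if (i == 1%N) && (j == 0%N) then (delta * x 1%N)^-1
  else if (i == 0%N) && (j == 2%N) then gamma * x 2%N
  else if (i == 2%N) && (j == 0%N) then (gamma * x 2%N)^-1
  else x j / x i.

Definition Pmat (R : realType) (n : nat) (x : nat -> R) (gamma delta : R)
  : 'M[R]_n := \matrix_(i < n, j < n) Pentry x gamma delta i j.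

(* k-th entry (0-based) of a column vector; 0 if out of range. *)
Definition ventry (R : realType) (n : nat) (w : 'cV[R]_n) (k : nat) : R :=
  if insub k is Some i then w i 0 else 0.

Definition principal_right_eigenvector (R : realType) (n : nat)
  (A : 'M[R]_n) (w : 'cV[R]_n) : Prop :=
  exists lam : R,
    [/\ A *m w = lam *: w,
        (forall i, 0 < w i 0) &
        (forall (mu : R) (v : 'cV[R]_n), v != 0 -> A *m v = mu *: v -> mu <= lam)].
Arguments Pmat {R} n x gamma delta.

(* Main.v *)
Require Import Defs.
From HB Require Import structures.
From mathcomp Require Import all_boot all_order all_algebra.
From mathcomp Require Import reals.
From mathcomp Require Import ring lra.
Import Order.TTheory GRing.Theory Num.Theory.
Local Open Scope ring_scope.
Set Implicit Arguments.

Lemma ventry_ord (R : realType) (n : nat) (w : 'cV[R]_n) (j : 'I_n) :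
  ventry w j = w j 0.
Proof. by rewrite /ventry valK. Qed.

Lemma ventry_pos (R : realType) (n : nat) (w : 'cV[R]_n) k :
  (forall i, 0 < w i 0) -> (k < n)%N -> 0 < ventry w k.
Proof.
move=> hw hk; rewrite /ventry; case: insubP => [i _ _|]; first exact: hw.
by rewrite hk.
Qed.

Lemma row_eq (R : realType) (n : nat) (x : nat -> R) g d (w : 'cV[R]_n) lam i :
  Pmat n x g d *m w = lam *: w -> (i < n)%N ->
  lam * ventry w i = \sum_(0 <= k < n) Pentry x g d i k * ventry w k.
Proof.
move=> ev hi.
have := congr1 (fun M : 'cV[R]_n => M (Ordinal hi) 0) ev.
rewrite /= !mxE => h.
rewrite (@ventry_ord _ _ w (Ordinal hi)) -h /=.
rewrite big_mkord.
by apply: eq_bigr => j _; rewrite mxE ventry_ord.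
Qed.

Theorem mainTheorem5 (R : realType) (n : nat) (x : nat -> R) (gamma delta : R)
  (w : 'cV[R]_n) :
  (4 <= n)%N ->
  x 0%N = 1 ->
  (forall k, (1 <= k < n)%N -> 0 < x k) ->
  0 < gamma -> 0 < delta -> gamma != 1 -> delta != 1 ->
  principal_right_eigenvector (Pmat n x gamma delta) w ->
  1 < delta -> gamma <= delta ->
  ventry w 0 / ventry w 1 < delta * x 1%N.
Proof.
move=> hn hx0 hx hg hd _ _ [lam [ev hw _]] hd1 hgd.
case: n hn x hx0 hx w ev hw => [|[|[|[|m]]]] // _ x hx0 hx w ev hw.
have xpos : forall k, (k < m.+4)%N -> 0 < x k.
  move=> [|k] hk; first by rewrite hx0.
  by apply: hx; rewrite hk.
have vpos : forall k, (k < m.+4)%N -> 0 < ventry w k.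
  by move=> k hk; apply: ventry_pos.
set v := ventry w.
have split4 : forall F : nat -> R, \sum_(0 <= k < m.+4) F k =
    F 0%N + F 1%N + F 2%N + \sum_(0 <= k < m.+1) F k.+3.
  by move=> F; rewrite !big_nat_recl // !addrA.
set S := \sum_(0 <= k < m.+1) x k.+3 * v k.+3.
have Spos : 0 < S.
  rewrite /S big_nat_recl //.
  have h1 : 0 < x 3%N * v 3%N by rewrite mulr_gt0 // ?xpos ?vpos.
  have h2 : 0 <= \sum_(0 <= i < m) x i.+4 * v i.+4.
    rewrite big_nat_cond sumr_ge0 // => i; rewrite andbT => /andP[_ hi].
    by rewrite mulr_ge0 // ltW // ?xpos ?vpos.
  lra.
have E0 := @row_eq _ _ _ _ _ _ _ 0%N ev (isT : (0 < m.+4)%N).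
have E1 := @row_eq _ _ _ _ _ _ _ 1%N ev (isT : (1 < m.+4)%N).
have E3 := @row_eq _ _ _ _ _ _ _ 3%N ev (isT : (3 < m.+4)%N).
rewrite !split4 in E0 E1 E3; rewrite /Pentry /= -/v in E0 E1 E3.
have lampos : 0 < lam.
  have h : 0 < lam * v 3%N.
    rewrite E3.
    have a0 : 0 < x 0%N / x 3%N * v 0%N by rewrite !mulr_gt0 ?invr_gt0 ?xpos ?vpos.
    have a1 : 0 < x 1%N / x 3%N * v 1%N by rewrite !mulr_gt0 ?invr_gt0 ?xpos ?vpos.
    have a2 : 0 < x 2%N / x 3%N * v 2%N by rewrite !mulr_gt0 ?invr_gt0 ?xpos ?vpos.
    have a3 : 0 <= \sum_(0 <= k < m.+1) x k.+3 / x 3%N * v k.+3.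
      rewrite big_nat_cond sumr_ge0 // => i; rewrite andbT => /andP[_ hi].
      by rewrite !mulr_ge0 // ltW // ?invr_gt0 ?xpos ?vpos.
    lra.
  by rewrite pmulr_lgt0 // vpos in h.
have S0 : \sum_(0 <= k < m.+1) x k.+3 / x 0%N * v k.+3 = S.
  by apply: eq_bigr => k _; rewrite hx0 divr1.
have S1 : x 1%N * \sum_(0 <= k < m.+1) x k.+3 / x 1%N * v k.+3 = S.
  rewrite mulr_sumr; apply: eq_bigr => k _.
  have : x 1%N != 0 by rewrite gt_eqF // xpos.
  move=> h; field.
  done.
rewrite S0 hx0 divr1 in E0.
have hx1 : 0 < x 1%N by exact: xpos.
have hx2 : 0 < x 2%N by exact: xpos.
have E1' : lam * v 1%N * (delta * x 1%N) =
    v 0%N + delta * x 1%N * v 1%N + delta * x 2%N * v 2%N + delta * S.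
  have -> : lam * v 1%N * (delta * x 1%N) = (delta * x 1%N) * (lam * v 1%N) by ring.
  rewrite E1 -S1.
  have : x 1%N != 0 by rewrite gt_eqF.
  have : delta != 0 by rewrite gt_eqF.
  move=> h1 h2; field.
  by rewrite h1 h2.
have key : 0 < lam * (delta * x 1%N * v 1%N - v 0%N).
  have : lam * (delta * x 1%N * v 1%N - v 0%N) =
     (delta - gamma) * x 2%N * v 2%N + (delta - 1) * S.
    rewrite mulrBr.
    have -> : lam * (delta * x 1%N * v 1%N) = lam * v 1%N * (delta * x 1%N) by ring.
    rewrite E1' E0; ring.
  move=> ->.
  have : 0 <= (delta - gamma) * x 2%N * v 2%N.
    by rewrite !mulr_ge0 ?subr_ge0 // ltW // vpos.
  have : 0 < (delta - 1) * S by rewrite mulr_gt0 // subr_gt0.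
  lra.
rewrite pmulr_rgt0 // subr_gt0 in key.
by rewrite ltr_pdivrMr ?vpos.
Qed.
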